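(* Let $q$ be a prime power and $u=(u_1,u_2,u_3)\in\mathbb{F}_q^3$. (1) If $\omega(u)=1$ and $\delta(u)=2$, then $|\widetilde{E}(u)|=0$. (2) If $\omega(u)=2$ and $\delta(u)=2$, then $|\widetilde{E}(u)|=0$. (3) If $\omega(u)=2$ and $\delta(u)=3$, then $|\widetilde{E}(u)|=(q-1)(q-3)$. (4) If $\omega(u)=3$ and $\delta(u)=1$, then $|\widetilde{E}(u)|=0$. (5) If $\omega(u)=3$ and $\delta(u)=2$, then $|\widetilde{E}(u)|=(q-1)(2q-6)$. (6) If $\omega(u)=3$ and $\delta(u)=3$, then $|\widetilde{E}(u)|=(q-1)(3q-11)$.
   Context: $\mathbb{F}_q$ is the finite field with $q$ elements. Hamming distance $d(u,v)=|\{i: u_i\ne v_i\}|$ on $\mathbb{F}_q^3$; $B(u)=\{v: d(u,v)\le1\}$; $E(u)=\bigcup_{\lambda\in\mathbb{F}_q}B(\lambda u)$. $\mathcal{D}_q=\{(u_1,u_2,u_3)\in\mathbb{F}_q^3 : u_1,u_2,u_3 \text{ pairwise distinct and nonzero}\}$ and $\widetilde{E}(u)=E(u)\cap\mathcal{D}_q$. The weight is $\omega(u)=|\{i: u_i\neq 0\}|$ and $\delta(u)=|\{u_1,u_2,u_3\}|$ is the number of distinct coordinate values. *)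

(* Defs.v *)
From HB Require Import structures.
From mathcomp Require Import all_boot all_order all_algebra all_field.
Set Implicit Arguments. Unset Strict Implicit. Unset Printing Implicit Defensive.
Import GRing.Theory.
Local Open Scope ring_scope.

Section Defs.
Variable F : finFieldType.
Definition vec3 := {ffun 'I_3 -> F}.

Definition hdist (u v : vec3) : nat := #|[set i : 'I_3 | u i != v i]|.
Definition hball (u : vec3) : {set vec3} := [set v : vec3 | (hdist u v <= 1)%N].
Definition vscale (l : F) (u : vec3) : vec3 := [ffun i => l * u i].
Definition Eset (u : vec3) : {set vec3} := \bigcup_(l : F) hball (vscale l u).
Definition Dq : {set vec3} :=
  [set u : vec3 | [forall i, u i != 0] &&
                  [forall i, forall j, (i != j) ==> (u i != u j)]].
Definition Etilde (u : vec3) : {set vec3} := Eset u :&: Dq.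
Definition weight (u : vec3) : nat := #|[set i : 'I_3 | u i != 0]|.
Definition ndistinct (u : vec3) : nat := #|[set u i | i : 'I_3]|.
End Defs.

(* Main.v *)
Require Import Defs.
From HB Require Import structures.
From mathcomp Require Import all_boot all_order all_algebra.
From mathcomp Require Import zify.
Import GRing.Theory.
Local Open Scope ring_scope.

Section Aux.
Variable F : finFieldType.
Variable u : vec3 F.

Definition i0 : 'I_3 := ord0.
Definition i1 : 'I_3 := inord 1.
Definition i2 : 'I_3 := inord 2.

Lemma card3 (P : pred 'I_3) : #|[set i | P i]| = (P i0 + P i1 + P i2)%N.
Proof.
rewrite -sum1_card big_mkcond /= !big_ord_recl big_ord0 !inE /=.
have e1 : (lift ord0 ord0 : 'I_3) = inord 1 by apply/val_inj; rewrite /= inordK.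
have e2 : (lift ord0 (lift ord0 ord0) : 'I_3) = inord 2 by apply/val_inj; rewrite /= inordK.
rewrite e1 e2 /i0 /i1 /i2. by case: (P ord0); case: (P (inord 1)); case: (P (inord 2)).
Qed.

Lemma ex_third (i j : 'I_3) : i != j -> exists t, (t != i) && (t != j).
Proof.
case: i => [[|[|[|?]]] Hi] //; case: j => [[|[|[|?]]] Hj] // _.
all: try (exists (Ordinal (isT : (2 < 3)%N)); done).
all: try (exists (Ordinal (isT : (1 < 3)%N)); done).
all: try (exists (Ordinal (isT : (0 < 3)%N)); done).
Qed.

Lemma ord3P (t : 'I_3) : [|| t == i0, t == i1 | t == i2].
Proof.
by case: t => [[|[|[|?]]] Ht] //; rewrite /i0 /i1 /i2 -!val_eqE /= ?inordK.
Qed.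

Lemma i01 : i0 != i1. Proof. by rewrite -val_eqE /= inordK. Qed.
Lemma i02 : i0 != i2. Proof. by rewrite -val_eqE /= inordK. Qed.
Lemma i12 : i1 != i2. Proof. by rewrite -val_eqE /= !inordK. Qed.

Lemma DqP3 (i j k : 'I_3) (v : vec3 F) : i != j -> i != k -> j != k ->
  (forall t, [|| t == i, t == j | t == k]) ->
  (v \in Dq F) = [&& v i != 0, v j != 0, v k != 0, v i != v j, v i != v k & v j != v k].
Proof.
move=> ij ik jk cov; rewrite inE; apply/idP/idP.
  case/andP=> /forallP H0 /forallP H1.
  rewrite !H0 /=.
  have := H1 i => /forallP Hi; have := H1 j => /forallP Hj.
  by rewrite (implyP (Hi j) ij) (implyP (Hi k) ik) (implyP (Hj k) jk).
case/and5P=> a b c d /andP[e f]; apply/andP; split.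
  by apply/forallP=> t; case/or3P: (cov t) => /eqP->.
apply/forallP=> t; apply/forallP=> s; apply/implyP.
case/or3P: (cov t) => /eqP->; case/or3P: (cov s) => /eqP-> //; rewrite ?eqxx //.
all: by move=> _; rewrite eq_sym.
Qed.

Definition A (i : 'I_3) : {set vec3 F} :=
  [set v in Dq F | [exists l, [forall t, (t != i) ==> (v t == l * u t)]]].
Definition M : {set vec3 F} := [set v in Dq F | [exists l, v == vscale l u]].

Lemma memA i v : (v \in A i) = (v \in Dq F) && [exists l, [forall t, (t != i) ==> (v t == l * u t)]].
Proof. by rewrite /A in_set. Qed.
Lemma memM v : (v \in M) = (v \in Dq F) && [exists l, v == vscale l u].
Proof. by rewrite /M in_set. Qed.

Lemma hdist_key (l : F) (v : vec3 F) :
  (hdist (vscale l u) v <= 1)%N = [exists i, [forall t, (t != i) ==> (v t == l * u t)]].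
Proof.
rewrite /hdist /vscale; set S := [set _ | _]; apply/idP/idP.
  rewrite leq_eqVlt ltnS leqn0; case/orP.
    case/cards1P=> x Sx; apply/existsP; exists x; apply/forallP=> t; apply/implyP=> tx.
    have : t \notin S by rewrite Sx in_set1.
    by rewrite inE ffunE negbK eq_sym.
  move/eqP/cards0_eq=> S0; apply/existsP; exists i0; apply/forallP=> t; apply/implyP=> _.
  have : t \notin S by rewrite S0 in_set0.
  by rewrite inE ffunE negbK eq_sym.
case/existsP=> i /forallP H.
suff: (#|S| <= #|[set i]|)%N by rewrite cards1.
apply: subset_leq_card; apply/subsetP=> t.
rewrite /S !inE ffunE; apply: contraR=> ti.
by rewrite eq_sym (implyP (H t) ti).
Qed.

Lemma Etilde_eq : Etilde u = A i0 :|: A i1 :|: A i2.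
Proof.
apply/setP=> v; rewrite /Etilde in_setI !in_setU /Eset.
apply/andP/idP.
  case=> /bigcupP[l _]; rewrite inE hdist_key => /existsP[i Hi] Dv.
  have Av : v \in A i by rewrite /A in_set Dv; apply/existsP; exists l.
  by case/or3P: (ord3P i) => /eqP Ei; rewrite -Ei Av ?orbT.
have H : forall i, v \in A i -> v \in \bigcup_l hball (vscale l u) /\ v \in Dq F.
  move=> i; rewrite /A in_set => /andP[Dv /existsP[l Hl]]; split=> //.
  by apply/bigcupP; exists l => //; rewrite inE hdist_key; apply/existsP; exists i.
by case/orP=> [/orP[]|]; move/H.
Qed.

Lemma Dq_scale (l : F) : vscale l u \in Dq F -> u \in Dq F.
Proof.
rewrite /vscale !inE => /andP[/forallP H0 /forallP H1]; apply/andP; split.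
  apply/forallP=> t; have := H0 t; rewrite ffunE; apply: contra => /eqP->.
  by rewrite mulr0.
apply/forallP=> t; apply/forallP=> s; apply/implyP=> ts.
have := implyP (forallP (H1 t) s) ts; rewrite !ffunE; apply: contra => /eqP->.
by [].
Qed.

Lemma AI (i i' : 'I_3) : i != i' -> A i :&: A i' = M.
Proof.
move=> ii'; apply/setP=> v; rewrite in_setI !memA memM /vscale; apply/idP/idP.
  case/andP=> /andP[Dv /existsP[l /forallP Hl]] /andP[_ /existsP[l' /forallP Hl']].
  rewrite Dv /=; apply/existsP; exists l.
  have [t /andP[ti ti']] := @ex_third i i' ii'.
  have E1 := eqP (implyP (Hl t) ti); have E2 := eqP (implyP (Hl' t) ti').
  have vt0 : v t != 0 by move: Dv; rewrite inE => /andP[/forallP H _]; exact: H.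
  have ut0 : u t != 0 by apply: contra vt0; rewrite E1 => /eqP->; rewrite mulr0.
  have ll' : l = l' by apply: (mulIf ut0); rewrite -E1 -E2.
  apply/eqP/ffunP=> s; rewrite ffunE.
  case: (eqVneq s i) => [->|si]; last exact: eqP (implyP (Hl s) si).
  by rewrite ll'; apply/eqP; apply: (implyP (Hl' i)).
case/andP=> Dv /existsP[l /eqP vE]; subst v; rewrite Dv /=.
by apply/andP; split; apply/existsP; exists l; apply/forallP=> t; apply/implyP=> _;
   rewrite ffunE.
Qed.

Lemma M_card : #|M| = if u \in Dq F then (#|F| - 1)%N else 0%N.
Proof.
case: ifP => Du.
  have -> : M = (fun l => vscale l u) @: [set l : F | l != 0].
    apply/setP=> v; rewrite memM; apply/andP/imsetP.
      case=> Dv /existsP[l /eqP vE]; exists l => //; rewrite inE.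
      apply: contraTneq Dv => l0; rewrite vE l0 inE; apply/nandP; left.
      by rewrite negb_forall; apply/existsP; exists i0; rewrite /vscale ffunE mul0r eqxx.
    case=> l; rewrite inE => l0 ->; split; last by apply/existsP; exists l.
    move: Du; rewrite !inE => /andP[/forallP H0 /forallP H1]; apply/andP; split.
      by apply/forallP=> t; rewrite ffunE mulf_neq0.
    apply/forallP=> t; apply/forallP=> s; apply/implyP=> ts.
    by rewrite !ffunE (inj_eq (mulfI l0)) (implyP (forallP (H1 t) s) ts).
  rewrite card_imset.
    have -> : [set l : F | l != 0] = [set~ 0] by apply/setP=> l; rewrite !inE.
    by rewrite cardsC1 subn1.
  move=> l l' /ffunP /(_ i0); rewrite !ffunE; apply: mulIf.
  by move: Du; rewrite inE => /andP[/forallP H _].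
apply/eqP; rewrite cards_eq0; apply/eqP/setP=> v; rewrite memM in_set0.
apply/negbTE; apply/negP=> /andP[Dv /existsP[l /eqP vE]].
by rewrite vE in Dv; rewrite (Dq_scale _ Dv) in Du.
Qed.

Lemma card_T3 (a b : F) : a != 0 -> b != 0 -> a != b -> #|[set 0; a; b]| = 3%N.
Proof.
move=> a0 b0 ab.
have -> : [set 0; a; b] = 0 |: [set a; b] by apply/setP=> x; rewrite !inE orbA.
rewrite cardsU1 cards2 ab !inE negb_or eq_sym a0 /= eq_sym b0.
by [].
Qed.

Lemma A_card (i j k : 'I_3) : i != j -> i != k -> j != k ->
  (forall t, [|| t == i, t == j | t == k]) ->
  #|A i| = if [&& u j != 0, u k != 0 & u j != u k]
           then ((#|F| - 1) * (#|F| - 3))%N else 0%N.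
Proof.
move=> ij ik jk cov.
pose g (p : F * F) : vec3 F := [ffun t => if t == i then p.2 else p.1 * u t].
have gi p : g p i = p.2 by rewrite ffunE eqxx.
have gt p t : t != i -> g p t = p.1 * u t by move=> ti; rewrite ffunE (negbTE ti).
have ji : j != i by rewrite eq_sym.
have ki : k != i by rewrite eq_sym.
have gD p : (g p \in Dq F) = [&& p.2 != 0, p.1 * u j != 0, p.1 * u k != 0,
     p.2 != p.1 * u j, p.2 != p.1 * u k & p.1 * u j != p.1 * u k].
  by rewrite (@DqP3 i j k (g p) ij ik jk cov) gi !gt.
have memS p : (p \in [set p | g p \in Dq F]) = (g p \in Dq F) by rewrite in_set.
have -> : A i = g @: [set p | g p \in Dq F].
  apply/setP=> v; rewrite memA; apply/andP/imsetP.
    case=> Dv /existsP[l /forallP Hl].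
    have gv : g (l, v i) = v.
      apply/ffunP=> t; rewrite ffunE; case: eqVneq => [->|ti] //.
      exact/esym/eqP/(implyP (Hl t) ti).
    by exists (l, v i); [rewrite memS gv | rewrite gv].
  case=> p; rewrite memS => Dp ->; split=> //; apply/existsP; exists p.1.
  by apply/forallP=> t; apply/implyP=> ti; rewrite gt.
rewrite card_in_imset; last first.
  move=> p p'; rewrite !memS => Dp Dp' E.
  have e2 : p.2 = p'.2 by rewrite -gi E gi.
  have uj0 : u j != 0.
    move: Dp; rewrite gD => /and5P[_ H _ _ _]; apply: contraNneq H => ->.
    by rewrite mulr0.
  have e1 : p.1 = p'.1 by apply: (mulIf uj0); rewrite -(gt p j ji) -(gt p' j ji) E.
  by move: e1 e2; case: p {Dp E} => [? ?]; case: p' {Dp'} => [? ?] /= -> ->.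
case: ifP => C.
  move/and3P: C => [uj0 uk0 ujk].
  have -> : [set p | g p \in Dq F] =
      [set p | (p.1 != 0) && (p.2 \in ~: [set 0; p.1 * u j; p.1 * u k])].
    apply/setP=> p; rewrite memS gD in_set.
    case: (eqVneq p.1 0) => [->|l0] /=; first by rewrite !mul0r eqxx /= !andbF.
    rewrite !mulf_neq0 // (inj_eq (mulfI l0)) ujk /= !inE !negb_or andbT andbA.
    by [].
  rewrite -sum1_card.
  rewrite (eq_bigl (fun p : F * F => (p.1 != 0) && (p.2 \in ~: [set 0; p.1 * u j; p.1 * u k])));
    last by move=> p; rewrite inE.
  rewrite -(pair_big_dep (fun l : F => l != 0) (fun l x => x \in ~: [set 0; l * u j; l * u k]) (fun _ _ => 1%N)) /=.
  rewrite (eq_bigr (fun _ => (#|F| - 3)%N)); last first.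
    move=> l l0; rewrite sum1_card cardsCs setCK card_T3 //.
      by rewrite mulf_neq0.
      by rewrite mulf_neq0.
    by rewrite (inj_eq (mulfI l0)).
  rewrite sum_nat_const; congr (_ * _)%N; rewrite subn1 -(cardC1 (0 : F)); apply: eq_card => x; by rewrite !inE.
apply/eqP; rewrite cards_eq0; apply/eqP/setP=> p; rewrite memS gD in_set0.
apply/negbTE; apply: contraFN C => /and5P[_ a b _ /andP[_ c]].
apply/and3P; split.
- by apply: contraNneq a => ->; rewrite mulr0.
- by apply: contraNneq b => ->; rewrite mulr0.
- by apply: contraNneq c => ->.
Qed.

Lemma cardE : (#|Etilde u| + 2 * #|M|)%N = (#|A i0| + #|A i1| + #|A i2|)%N.
Proof.
rewrite Etilde_eq.
have H := cardsUI (A i0 :|: A i1) (A i2).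
rewrite setIUl !AI ?i02 ?i12 // setUid in H.
have H2 := cardsUI (A i0) (A i1).
rewrite AI ?i01 // in H2.
lia.
Qed.

Lemma weight_eq : weight u = ((u i0 != 0%R) + (u i1 != 0%R) + (u i2 != 0%R))%N.
Proof. by rewrite /weight card3. Qed.

Lemma nd_eq : ndistinct u =
   (~~ ((u i0 == u i1) || (u i0 == u i2)) + (u i1 != u i2).+1)%N.
Proof.
rewrite /ndistinct.
have -> : [set u i | i : 'I_3] = u i0 |: [set u i1; u i2].
  apply/setP=> x; rewrite !inE; apply/imsetP/idP.
    by case=> i _ ->; case/or3P: (ord3P i) => /eqP->; rewrite eqxx ?orbT.
  by case/or3P=> /eqP->; [exists i0|exists i1|exists i2].
by rewrite cardsU1 cards2 in_set2.
Qed.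

Lemma q3 (x y : F) : x != 0 -> y != 0 -> x != y -> (3 <= #|F|)%N.
Proof. by move=> x0 y0 xy; rewrite -(@card_T3 x y x0 y0 xy) max_card. Qed.

End Aux.

Ltac kill := repeat match goal with
 | h : is_true (?x != ?y) |- context[?x == ?y] => rewrite (negbTE h)
 | h : is_true (?x != ?y) |- context[?y == ?x] => rewrite [y == x]eq_sym (negbTE h)
end.

Theorem theorem5 (F : finFieldType) (u : vec3 F) :
  let q : int := (#|F|)%:Z in
  let e : int := (#|Etilde u|)%:Z in
  ((weight u = 1)%N -> (ndistinct u = 2)%N -> e = 0) /\
  ((weight u = 2)%N -> (ndistinct u = 2)%N -> e = 0) /\
  ((weight u = 2)%N -> (ndistinct u = 3)%N -> e = (q - 1) * (q - 3)) /\
  ((weight u = 3)%N -> (ndistinct u = 1)%N -> e = 0) /\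
  ((weight u = 3)%N -> (ndistinct u = 2)%N -> e = (q - 1) * (2 * q - 6)) /\
  ((weight u = 3)%N -> (ndistinct u = 3)%N -> e = (q - 1) * (3 * q - 11)).
Proof.
move=> q e; rewrite {}/q {}/e.
have he := @cardE F u.
rewrite (@A_card F u i0 i1 i2 i01 i02 i12 ord3P) in he.
have cov1 t : [|| t == i1, t == i0 | t == i2] by case/or3P: (ord3P t) => ->; rewrite ?orbT.
have cov2 t : [|| t == i2, t == i0 | t == i1] by case/or3P: (ord3P t) => ->; rewrite ?orbT.
rewrite (@A_card F u i1 i0 i2 (negbT (introF eqP (fun h => (negP i01) (introT eqP (esym h))))) i12 i02 cov1) in he.
rewrite (@A_card F u i2 i0 i1 (negbT (introF eqP (fun h => (negP i02) (introT eqP (esym h)))))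
                               (negbT (introF eqP (fun h => (negP i12) (introT eqP (esym h))))) i01 cov2) in he.
rewrite M_card (@DqP3 F i0 i1 i2 u i01 i02 i12 ord3P) in he.
rewrite (@weight_eq F u) (@nd_eq F u).
have hq : forall x y : F, x != 0 -> y != 0 -> x != y -> (2 < #|F|)%N := @q3 F.
move: he hq; set q := #|F|; clearbody q => he hq.
move: he; move: (#|Etilde u|) => e.
move: (u i0) (u i1) (u i2) => a b c.
case: (eqVneq a 0) => [?|a0]; case: (eqVneq b 0) => [?|b0]; case: (eqVneq c 0) => [?|c0]; subst.
all: try (case: (eqVneq a b) => [?|ab]; subst).
all: try (case: (eqVneq a c) => [?|ac]; subst).
all: try (case: (eqVneq b c) => [?|bc]; subst).
all: kill; rewrite ?eqxx /=.
all: try (match goal with h : is_true (?x != ?x) |- _ => by rewrite eqxx in h end).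
all: try match goal with h1 : is_true (?x != 0), h2 : is_true (?y != 0), h3 : is_true (?x != ?y) |- _ => have := hq _ _ h1 h2 h3 end.
all: try (move=> /subnK; move: (q - 3)%N => n hn; subst q;
          have E1 : (n + 3 - 1 = n + 2)%N by lia;
          rewrite E1 addnK).
all: intros; repeat split; intros; nia.
Qed.
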